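(* Let $(X,d)$ be a metric space, and let $K\in\mathcal{K}(X)$ and $u\in\mathcal{F}(X)$ satisfy $\delta:=d_E(\chi_K,u)<\tfrac12$. Then $d_H(K,u_\alpha)\le\delta$ for every $\alpha\in\,]\delta,1-\delta]$.
   Context: Let $\mathbb{I}=[0,1]$. For a fuzzy set $u:X\to\mathbb{I}$ on a metric space $(X,d)$, its $\alpha$-level is $u_\alpha=\{x\in X: u(x)\ge\alpha\}$ for $\alpha\in\,]0,1]$, and $u_0=\overline{\{x\in X: u(x)>0\}}$. $\mathcal{F}(X)$ denotes the set of upper-semicontinuous fuzzy sets $u$ such that $u_0$ is compact and $u_1\neq\varnothing$. $\mathcal{K}(X)$ is the set of non-empty compact subsets of $X$, and for non-empty closed sets $C_1,C_2$ the Hausdorff distance is $d_H(C_1,C_2)=\max\{\sup_{x\in C_1}d(x,C_2),\sup_{y\in C_2}d(y,C_1)\}$. For $K\in\mathcal{K}(X)$, $\chi_K$ is the characteristic function of $K$ (an element of $\mathcal{F}(X)$). On $X\times\mathbb{I}$ use the metric $\overline{d}((x,\alpha),(y,\beta))=\max\{d(x,y),|\alpha-\beta|\}$. The endograph of $u$ is $\operatorname{end}(u)=\{(x,\alpha)\in X\times\mathbb{I}: u(x)\ge\alpha\}$, and the endograph metric is $d_E(u,v)=\overline{d}_H(\operatorname{end}(u),\operatorname{end}(v))$, the Hausdorff distance in $(X\times\mathbb{I},\overline{d})$. *)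

(* Defs.v *)
From HB Require Import structures.
From mathcomp Require Import all_boot all_order all_algebra.
From mathcomp Require Import all_classical all_reals all_analysis.
Set Implicit Arguments. Unset Strict Implicit. Unset Printing Implicit Defensive.
Import Order.TTheory GRing.Theory Num.Theory.
Local Open Scope classical_set_scope.
Local Open Scope ring_scope.

Section Defs.
Context {R : realType} {X : Type}.

Record is_metric (d : X -> X -> R) : Prop := {
  metric_ge0 : forall x y, 0 <= d x y;
  metric_eq0 : forall x y, d x y = 0 <-> x = y;
  metric_sym : forall x y, d x y = d y x;
  metric_tri : forall x y z, d x z <= d x y + d y z }.

Variable d : X -> X -> R.

Definition mopen (A : set X) : Prop :=
  forall x, A x -> exists e : R, 0 < e /\ forall y, d x y < e -> A y.

Definition mclosure (A : set X) : set X :=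
  [set x | forall e : R, 0 < e -> exists y, A y /\ d x y < e].

Definition mcompact (A : set X) : Prop :=
  forall (I : Type) (U : I -> set X), (forall i, mopen (U i)) ->
    A `<=` \bigcup_i U i ->
    exists F : set I, finite_set F /\ A `<=` \bigcup_(i in F) U i.

Definition in_K (K : set X) : Prop := K !=set0 /\ mcompact K.

Definition usc (u : X -> R) : Prop :=
  forall x (e : R), 0 < e -> exists r : R, 0 < r /\
    forall y, d x y < r -> u y < u x + e.

Definition level (u : X -> R) (alpha : R) : set X :=
  if 0 < alpha then [set x | alpha <= u x] else mclosure [set x | 0 < u x].

Definition in_F (u : X -> R) : Prop :=
  [/\ forall x, 0 <= u x <= 1, usc u, mcompact (level u 0) & level u 1 !=set0].

End Defs.

Definition chi {R : realType} {X : Type} (K : set X) : X -> R :=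
  fun x => if `[< K x >] then 1 else 0.

Definition dist_to {R : realType} {T : Type} (D : T -> T -> R) (x : T) (C : set T) : \bar R :=
  ereal_inf [set (D x y)%:E | y in C].

Definition hausdorff {R : realType} {T : Type} (D : T -> T -> R) (C1 C2 : set T) : \bar R :=
  maxe (ereal_sup [set dist_to D x C2 | x in C1])
       (ereal_sup [set dist_to D y C1 | y in C2]).

Definition dbar {R : realType} {X : Type} (d : X -> X -> R) (p q : X * R) : R :=
  Num.max (d p.1 q.1) `|p.2 - q.2|.

Definition endograph {R : realType} {X : Type} (u : X -> R) : set (X * R) :=
  [set p | 0 <= p.2 <= 1 /\ p.2 <= u p.1].

Definition d_E {R : realType} {X : Type} (d : X -> X -> R) (u v : X -> R) : \bar R :=
  hausdorff (dbar d) (endograph u) (endograph v).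

(* Main.v *)
Require Import Defs.
From HB Require Import structures.
From mathcomp Require Import all_boot all_order all_algebra.
From mathcomp Require Import all_classical all_reals all_analysis.
From mathcomp Require Import lra.
Import Order.TTheory GRing.Theory Num.Theory.
Local Open Scope classical_set_scope.
Local Open Scope ring_scope.

Lemma finite_nat_bound (F : set nat) : finite_set F ->
  exists N : nat, forall i, F i -> (i <= N)%N.
Proof.
move=> fF; rewrite -(fset_setK fF).
exists (\max_(i <- finmap.enum_fset (fset_set F)) i)%N => i Fi.
by apply: (leq_bigmax_seq (F := fun j => j)) => //.
Qed.

Lemma dist_to_ge0 (R : realType) (T : Type) (D : T -> T -> R) x C :
  (forall a b, 0 <= D a b) -> (0 <= dist_to D x C)%E.
Proof.
move=> D0; apply: le_ereal_inf_tmp => _ [y _ <-]; by rewrite lee_fin.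
Qed.

Lemma dist_to_lt (R : realType) (T : Type) (D : T -> T -> R) x C (e : R) :
  (dist_to D x C < e%:E)%E -> exists2 y, C y & D x y < e.
Proof.
move=> /ereal_inf_lt [_ [y Cy <-]]; rewrite lte_fin => h; by exists y.
Qed.
Arguments dist_to_lt {R T D x C e}.

Lemma dist_to_le (R : realType) (T : Type) (D : T -> T -> R) x C y :
  C y -> (dist_to D x C <= (D x y)%:E)%E.
Proof. by move=> Cy; apply: ereal_inf_lbound; exists y. Qed.
Arguments dist_to_le {R T D x C y}.

Lemma chi_pos (R : realType) (X : Type) (K : set X) x :
  0 < (chi K x : R) -> K x.
Proof. by rewrite /chi; case: asboolP => // _; rewrite ltxx. Qed.

Lemma chi_in (R : realType) (X : Type) (K : set X) x :
  K x -> (chi K x : R) = 1.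
Proof. by rewrite /chi; case: asboolP. Qed.

Theorem lemma2p4 (R : realType) (X : Type) (d : X -> X -> R)
  (K : set X) (u : X -> R) :
  is_metric d -> in_K d K -> in_F d u ->
  (d_E d (chi K) u < (2^-1)%:E)%E ->
  forall alpha : R,
    (d_E d (chi K) u < alpha%:E)%E ->
    (alpha%:E <= 1%E - d_E d (chi K) u)%E ->
    (hausdorff d K (level d u alpha) <= d_E d (chi K) u)%E.
Proof.
move=> hm [[x0 Kx0] cK] [u01 uusc cu0 _] hd alpha hal hau.
have dbar0 : forall p q, 0 <= dbar d p q.
  by move=> p q; rewrite /dbar le_max (metric_ge0 hm).
have H1 : forall p, endograph (chi K) p ->
    (dist_to (dbar d) p (endograph u) <= d_E d (chi K) u)%E.
  move=> p Ep; rewrite /d_E /hausdorff le_max; apply/orP; left.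
  by apply: ereal_sup_ubound; exists p.
have H2 : forall p, endograph u p ->
    (dist_to (dbar d) p (endograph (chi K)) <= d_E d (chi K) u)%E.
  move=> p Ep; rewrite /d_E /hausdorff le_max; apply/orP; right.
  by apply: ereal_sup_ubound; exists p.
have E1x : forall x, K x -> endograph (chi K : X -> R) (x, 1).
  by move=> x Kx; rewrite /endograph /= chi_in // ler01 lexx.
have dge0 : (0 <= d_E d (chi K) u)%E.
  by apply: le_trans (H1 _ (E1x _ Kx0)); apply: dist_to_ge0.
have dfin : d_E d (chi K) u \is a fin_num.
  by rewrite ge0_fin_numE // (lt_trans hd) // ltry.
move: H1 H2 dge0 hd hal hau.
rewrite -(fineK dfin); set r := fine _ => H1 H2.
rewrite !lee_fin !lte_fin => r0 rh ral aur.
have a0 : 0 < alpha by apply: le_lt_trans ral.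
have lvl : level d u alpha = [set x | alpha <= u x] by rewrite /level a0.
have P1 : forall x, K x -> exists y, d x y <= r /\ 1 - r <= u y.
  move=> x Kx.
  have [//|H] := pselect (exists y, d x y <= r /\ 1 - r <= u y).
  have hx := H1 _ (E1x _ Kx).
  have nr : forall e, 0 < e -> exists y, d x y < r + e /\ 1 - r - e < u y.
    move=> e e0.
    have : (dist_to (dbar d) (x, 1%R) (endograph u) < (r + e)%:E)%E.
      by apply: le_lt_trans hx _; rewrite lte_fin ltrDl.
    case/dist_to_lt => [[y b] [/andP[b0 b1] bu]].
    rewrite /dbar /= gt_max => /andP[dxy hb]; exists y; split => //.
    apply: lt_le_trans bu; move: hb; rewrite ger0_norm ?subr_ge0 //.
    by move=> hb /=; lra.
  pose U (n : nat) := [set w | r + n.+1%:R^-1 < d x w \/ u w < 1 - r - n.+1%:R^-1].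
  have Uo : forall n, mopen d (U n).
    move=> n w [h|h].
    - exists (d x w - (r + n.+1%:R^-1)); split; first by rewrite subr_gt0.
      move=> y dy; left.
      have := metric_tri hm x y w; rewrite (Defs.metric_sym hm y w) => t.
      move: dy; set q := _^-1 => dy. lra.
    - have [rho [rho0 hr]] := uusc w (1 - r - n.+1%:R^-1 - u w) ltac:(by rewrite subr_gt0).
      exists rho; split => // y dy; right.
      have := hr y dy; set q := _^-1; lra.
  have cover : level d u 0 `<=` \bigcup_n U n.
    move=> z _.
    have : ~ (d x z <= r /\ 1 - r <= u z) by move=> hz; apply: H; exists z.
    case: (leP (d x z) r) => hdz.
    - case: (leP (1 - r) (u z)) => huz hn; first by exfalso; apply: hn.
      have [k hk] := ltr_add_invr huz.
      exists k => //; right; move: hk; set q := _^-1; lra.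
    - move=> _; have [k hk] := ltr_add_invr hdz.
      by exists k => //; left.
  have [F [fF sF]] := cu0 _ _ Uo cover.
  have [N hN] := finite_nat_bound _ fF.
  have mono : forall i, (i <= N)%N -> U i `<=` U N.
    move=> i iN w; have hi : N.+1%:R^-1 <= i.+1%:R^-1 :> R.
      by rewrite lef_pV2 ?posrE // ler_nat ltnS.
    case=> h; [left | right]; move: h hi; set a := N.+1%:R^-1; set b := i.+1%:R^-1; lra.
  have e0 : 0 < N.+2%:R^-1 :> R by rewrite invr_gt0.
  have [y [dy uy]] := nr _ e0.
  have eN : N.+2%:R^-1 < N.+1%:R^-1 :> R by rewrite ltf_pV2 ?posrE // ltr_nat.
  have yl : level d u 0 y.
    rewrite /level ltxx => e ep; exists y; split; last by rewrite (proj2 (metric_eq0 hm y y)).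
    have h2 : N.+2%:R^-1 <= 2^-1 :> R by rewrite lef_pV2 ?posrE // ler_nat.
    move: h2 uy rh; set q := N.+2%:R^-1; rewrite /=; lra.
  have [i Fi Ui] := sF _ yl.
  case: (mono _ (hN _ Fi) _ Ui) => h;
    move: h dy uy eN; set q1 := N.+1%:R^-1; set q2 := N.+2%:R^-1; lra.
have P2 : forall y, alpha <= u y -> (dist_to d y K <= r%:E)%E.
  move=> y ay.
  have Ey : endograph u (y, alpha).
    by rewrite /endograph /=; split => //; apply/andP; split; [exact: ltW | lra].
  have hy := H2 _ Ey.
  apply/lee_addgt0Pr => e e0.
  have [ep [ep0 epe epa]] : exists ep, [/\ 0 < ep, ep <= e & ep <= (alpha - r) / 2].
    exists (Num.min e ((alpha - r) / 2)); split.
    - by rewrite lt_min e0 /=; apply: divr_gt0 => //; rewrite subr_gt0.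
    - by rewrite ge_min lexx.
    - by rewrite ge_min lexx orbT.
  have : (dist_to (dbar d) (y, alpha) (endograph (chi K)) < (r + ep)%:E)%E.
    by apply: le_lt_trans hy _; rewrite lte_fin ltrDl.
  case/dist_to_lt => [[z b] [/andP[b0 b1] bz]].
  rewrite /dbar /= gt_max => /andP[dyz /ltr_normlP [hb1 hb2]].
  have Kz : K z.
    apply: chi_pos; apply: lt_le_trans bz; rewrite /=; lra.
  apply: le_trans (dist_to_le (D:=d) (x:=y) Kz) _; rewrite lee_fin; lra.
rewrite /hausdorff ge_max; apply/andP; split; apply: ge_ereal_sup => _ [x Kx <-].
- have [y [dxy uy]] := P1 x Kx.
  have ly : level d u alpha y by rewrite lvl /=; lra.
  by apply: le_trans (dist_to_le (D:=d) (x:=x) ly) _; rewrite lee_fin.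
- by move: Kx; rewrite lvl => ax; exact: P2.
Qed.
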